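(* Let ${}^*$ be a nonstandard enlargement. Then there is an infinite nonstandard natural number $k\in{}^*\mathbb N$ such that ${}^*\sin(kt)$ is infinitesimal for all standard reals $t$.
   Context: A nonstandard universe is an embedding ${}^*$ of the superstructure $V(X)$ over a base set $X\supseteq\mathbb R$ into a superstructure $V(Y)$ with ${}^*X=Y$, ${}^*x=x$ for $x\in X$, $A\subsetneq{}^*A$ for every infinite $A\subseteq X$, satisfying transfer for bounded ($\Sigma_0$) formulas. A set $B\in V(Y)$ is hyperfinite if $B\in{}^*P^{\mathrm{fin}}(A)$ for some $A\in V(X)$, where $P^{\mathrm{fin}}(A)$ is the set of finite subsets of $A$. The universe is an enlargement if for every $A\in V(X)\setminus X$ there is a hyperfinite $B$ with $\{{}^*a:a\in A\}\subseteq B$. A nonstandard natural number is infinite if it is not standard; a nonstandard real is infinitesimal if its absolute value is below every standard $1/n$. *)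

(* Defs.v *)
From Stdlib Require Import Reals List.
Open Scope R_scope.

(** * Hereditary sets over a type of atoms (Aczel-style, with atoms).
    Sets are given by an indexed family of members; equality is
    extensional ([eqS]), membership is [mem]. *)
Inductive HS (A : Type) : Type :=
| atom : A -> HS A
| hset : forall I : Type, (I -> HS A) -> HS A.
Arguments atom {A} _.
Arguments hset {A I} _.

Fixpoint eqS {A : Type} (a b : HS A) {struct a} : Prop :=
  match a with
  | atom x => match b with atom y => x = y | hset _ => False end
  | hset f => match b with
              | atom _ => False
              | hset g => (forall i, exists j, eqS (f i) (g j)) /\
                          (forall j, exists i, eqS (f i) (g j))
              end
  end.

Definition mem {A : Type} (x s : HS A) : Prop :=
  match s with atom _ => False | hset f => exists i, eqS x (f i) end.

Definition subS {A : Type} (s t : HS A) : Prop := forall y, mem y s -> mem y t.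
Definition is_atom {A : Type} (x : HS A) : Prop := exists a, eqS x (atom a).
Definition emptyS {A : Type} : HS A := hset (fun e : Empty_set => match e with end).
Definition sing {A : Type} (a : HS A) : HS A := hset (fun _ : unit => a).
Definition upair {A : Type} (a b : HS A) : HS A :=
  hset (fun t : bool => if t then a else b).
Definition kpair {A : Type} (a b : HS A) : HS A := upair (sing a) (upair a b).

Definition atoms (A : Type) : HS A := hset (fun a : A => atom a).

(** * The superstructure levels: V_0 = A, V_(n+1) = V_n ∪ P(V_n). *)
Fixpoint lvlIdx (A : Type) (n : nat) : Type :=
  match n with
  | O => A
  | S m => (lvlIdx A m + (lvlIdx A m -> Prop))%type
  end.

Fixpoint lvl (A : Type) (n : nat) {struct n} : lvlIdx A n -> HS A :=
  match n as n0 return lvlIdx A n0 -> HS A with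
  | O => fun a => atom a
  | S m => fun i => match i with
                    | inl j => lvl A m j
                    | inr P => hset (fun s : {j : lvlIdx A m | P j} => lvl A m (proj1_sig s))
                    end
  end.

Definition Vn (A : Type) (n : nat) : HS A := hset (lvl A n).
Definition inV {A : Type} (x : HS A) : Prop := exists n, mem x (Vn A n).

Definition finS {A : Type} (s : HS A) : Prop :=
  exists l : list (HS A), forall y, mem y s <-> exists z, In z l /\ eqS y z.
Definition subAtoms {A : Type} (s : HS A) : Prop := forall y, mem y s -> is_atom y.

Definition Pfin {A : Type} (s : HS A) : HS A :=
  match s with
  | atom _ => sing emptyS
  | hset f => hset (fun l : list _ => hset (fun p : {i | In i l} => f (proj1_sig p)))
  end.

Definition img {A B : Type} (st : HS A -> HS B) (s : HS A) : HS B :=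
  match s with
  | atom _ => emptyS
  | hset f => hset (fun i => st (f i))
  end.

(** * Bounded (Σ0) formulas of the language {∈, =} with constants, de Bruijn variables *)
Inductive tm (C : Type) : Type :=
| tvar : nat -> tm C
| tcst : C -> tm C.
Arguments tvar {C} _.
Arguments tcst {C} _.

Inductive fm (C : Type) : Type :=
| fMem : tm C -> tm C -> fm C
| fEq  : tm C -> tm C -> fm C
| fNot : fm C -> fm C
| fAnd : fm C -> fm C -> fm C
| fOr  : fm C -> fm C -> fm C
| fImp : fm C -> fm C -> fm C
| fAll : tm C -> fm C -> fm C   (* ∀ x ∈ t, φ  (x = variable 0 in φ) *)
| fEx  : tm C -> fm C -> fm C.
Arguments fMem {C} _ _. Arguments fEq {C} _ _. Arguments fNot {C} _.
Arguments fAnd {C} _ _. Arguments fOr {C} _ _. Arguments fImp {C} _ _.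
Arguments fAll {C} _ _. Arguments fEx {C} _ _.

Definition tm_map {C D : Type} (g : C -> D) (t : tm C) : tm D :=
  match t with tvar n => tvar n | tcst c => tcst (g c) end.

Fixpoint fm_map {C D : Type} (g : C -> D) (p : fm C) : fm D :=
  match p with
  | fMem a b => fMem (tm_map g a) (tm_map g b)
  | fEq a b => fEq (tm_map g a) (tm_map g b)
  | fNot q => fNot (fm_map g q)
  | fAnd q r => fAnd (fm_map g q) (fm_map g r)
  | fOr q r => fOr (fm_map g q) (fm_map g r)
  | fImp q r => fImp (fm_map g q) (fm_map g r)
  | fAll t q => fAll (tm_map g t) (fm_map g q)
  | fEx t q => fEx (tm_map g t) (fm_map g q)
  end.

Definition tm_ok {C : Type} (P : C -> Prop) (k : nat) (t : tm C) : Prop :=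
  match t with tvar n => (n < k)%nat | tcst c => P c end.

Fixpoint fm_ok {C : Type} (P : C -> Prop) (k : nat) (p : fm C) : Prop :=
  match p with
  | fMem a b | fEq a b => tm_ok P k a /\ tm_ok P k b
  | fNot q => fm_ok P k q
  | fAnd q r | fOr q r | fImp q r => fm_ok P k q /\ fm_ok P k r
  | fAll t q | fEx t q => tm_ok P k t /\ fm_ok P (S k) q
  end.

Definition scons {A : Type} (x : A) (e : nat -> A) : nat -> A :=
  fun n => match n with O => x | S m => e m end.

Definition tm_eval {A : Type} (e : nat -> HS A) (t : tm (HS A)) : HS A :=
  match t with tvar n => e n | tcst c => c end.

Fixpoint sat {A : Type} (e : nat -> HS A) (p : fm (HS A)) : Prop :=
  match p with
  | fMem a b => mem (tm_eval e a) (tm_eval e b)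
  | fEq a b => eqS (tm_eval e a) (tm_eval e b)
  | fNot q => ~ sat e q
  | fAnd q r => sat e q /\ sat e r
  | fOr q r => sat e q \/ sat e r
  | fImp q r => sat e q -> sat e r
  | fAll t q => forall y, mem y (tm_eval e t) -> sat (scons y e) q
  | fEx t q => exists y, mem y (tm_eval e t) /\ sat (scons y e) q
  end.

Definition transfer {X Y : Type} (star : HS X -> HS Y) : Prop :=
  forall p : fm (HS X), fm_ok inV 0 p ->
    (sat (fun _ => emptyS) p <-> sat (fun _ => emptyS) (fm_map star p)).

(** * Nonstandard universes and enlargements.
    [iX : X -> Y] realizes the inclusion X ⊆ Y; [star] is the map V(X) -> V(Y). *)
Definition nonstandard_universe {X Y : Type} (iX : X -> Y) (star : HS X -> HS Y) : Prop :=
  (forall x y, iX x = iX y -> x = y) /\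
  (forall a, inV a -> inV (star a)) /\
  eqS (star (atoms X)) (atoms Y) /\
  (forall x, eqS (star (atom x)) (atom (iX x))) /\
  (forall A, inV A -> subAtoms A -> ~ finS A ->
     subS (img star A) (star A) /\ exists y, mem y (star A) /\ ~ mem y (img star A)) /\
  transfer star.

Definition hyperfinite {X Y : Type} (star : HS X -> HS Y) (B : HS Y) : Prop :=
  exists A, inV A /\ mem B (star (Pfin A)).

Definition enlargement {X Y : Type} (iX : X -> Y) (star : HS X -> HS Y) : Prop :=
  nonstandard_universe iX star /\
  forall A, inV A -> ~ is_atom A ->
    exists B, hyperfinite star B /\ subS (img star A) B.

Section RealStructure.
Context {X : Type} (rX : R -> X).
Definition rS (r : R) : HS X := atom (rX r).
Definition NatS : HS X := hset (fun n : nat => rS (INR n)).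
Definition graph1 (f : R -> R) : HS X := hset (fun r : R => kpair (rS r) (rS (f r))).
Definition graph2 (g : R -> R -> R) : HS X :=
  hset (fun p : (R * R)%type => kpair (kpair (rS (fst p)) (rS (snd p))) (rS (g (fst p) (snd p)))).
Definition ltS : HS X :=
  hset (fun p : {p : (R * R)%type | fst p < snd p} =>
          kpair (rS (fst (proj1_sig p))) (rS (snd (proj1_sig p)))).
Definition sinS : HS X := graph1 sin.
Definition absS : HS X := graph1 Rabs.
Definition mulS : HS X := graph2 Rmult.
End RealStructure.

Definition appS {A : Type} (F a b : HS A) : Prop := mem (kpair a b) F.

Definition infinitesimal {X Y : Type} (rX : R -> X) (star : HS X -> HS Y) (v : HS Y) : Prop :=
  forall n : nat, (0 < n)%nat ->
    exists w, appS (star (absS rX)) v w /\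
              mem (kpair w (star (rS rX (/ INR n)))) (star (ltS rX)).

(* Main.v *)
Require Import Defs.
From Stdlib Require Import Reals List Lra Lia ZArith ClassicalEpsilon Classical.
Open Scope R_scope.

Section HSL.
Context {A : Type}.

Lemma eqS_refl (a : HS A) : eqS a a.
Proof.
  induction a as [x|I f IH]; simpl; auto.
  split; intro i; exists i; apply IH.
Qed.

Lemma eqS_sym (a b : HS A) : eqS a b -> eqS b a.
Proof.
  revert b; induction a as [x|I f IH]; intros [y|J g]; simpl; auto.
  intros [H1 H2]; split.
  - intro j; destruct (H2 j) as [i Hi]; exists i; apply IH; auto.
  - intro i; destruct (H1 i) as [j Hj]; exists j; apply IH; auto.
Qed.

Lemma eqS_trans (a b c : HS A) : eqS a b -> eqS b c -> eqS a c.
Proof.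
  revert b c; induction a as [x|I f IH]; intros [y|J g] [z|K h]; simpl; auto;
    try tauto.
  - intros; congruence.
  - intros [H1 H2] [H3 H4]; split.
    + intro i; destruct (H1 i) as [j Hj]; destruct (H3 j) as [k Hk].
      exists k; eapply IH; eauto.
    + intro k; destruct (H4 k) as [j Hj]; destruct (H2 j) as [i Hi].
      exists i; eapply IH; eauto.
Qed.

Lemma mem_eqS_l (x y s : HS A) : eqS x y -> mem x s -> mem y s.
Proof.
  destruct s as [|I f]; simpl; auto.
  intros H [i Hi]; exists i; eapply eqS_trans; eauto using eqS_sym.
Qed.

Lemma mem_eqS_r (x s t : HS A) : eqS s t -> mem x s -> mem x t.
Proof.
  destruct s as [a|I f]; destruct t as [b|J g]; simpl; try tauto.
  intros [H1 H2] [i Hi]. destruct (H1 i) as [j Hj]; exists j.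
  eapply eqS_trans; eauto.
Qed.

Definition isSet (s : HS A) : Prop := match s with atom _ => False | hset _ => True end.

Lemma eqS_ext (s t : HS A) : isSet t ->
  (eqS s t <-> (isSet s /\ forall z, mem z s <-> mem z t)).
Proof.
  destruct s as [a|I f]; destruct t as [b|J g]; simpl; try tauto.
  intros _. split.
  - intros [H1 H2]; split; auto; intro z; split.
    + intros [i Hi]; destruct (H1 i) as [j Hj]; exists j; eapply eqS_trans; eauto.
    + intros [j Hj]; destruct (H2 j) as [i Hi]; exists i; eapply eqS_trans; eauto using eqS_sym.
  - intros [_ H]; split.
    + intro i; destruct (proj1 (H (f i))) as [j Hj]; [exists i; apply eqS_refl|].
      exists j; auto.
    + intro j; destruct (proj2 (H (g j))) as [i Hi]; [exists j; apply eqS_refl|].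
      exists i; apply eqS_sym; auto.
Qed.

Lemma mem_sing (z a : HS A) : mem z (sing a) <-> eqS z a.
Proof. simpl; split; [intros [_ H]; auto | intro H; exists tt; auto]. Qed.

Lemma mem_upair (z a b : HS A) : mem z (upair a b) <-> eqS z a \/ eqS z b.
Proof.
  simpl; split.
  - intros [[|] H]; auto.
  - intros [H|H]; [exists true|exists false]; auto.
Qed.

Lemma upair_resp (a b c d : HS A) : eqS a c -> eqS b d -> eqS (upair a b) (upair c d).
Proof.
  intros H1 H2; simpl; split; intros [|]; [exists true|exists false|exists true|exists false]; auto.
Qed.

Lemma sing_resp (a c : HS A) : eqS a c -> eqS (sing a) (sing c).
Proof. intros H; simpl; split; intros []; exists tt; auto. Qed.

Lemma kpair_resp (a b c d : HS A) : eqS a c -> eqS b d -> eqS (kpair a b) (kpair c d).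
Proof. intros; apply upair_resp; [apply sing_resp|apply upair_resp]; auto. Qed.

Lemma eqS_sing_inv (a b : HS A) : eqS (sing a) (sing b) -> eqS a b.
Proof. simpl; intros [H _]; destruct (H tt) as [_ H']; auto. Qed.

Lemma sing_upair_inv (a b c : HS A) : eqS (sing a) (upair b c) -> eqS a b /\ eqS a c.
Proof.
  intros H. split.
  - assert (mem b (sing a)) by (eapply mem_eqS_r; [apply eqS_sym; eauto|]; apply mem_upair; left; apply eqS_refl).
    apply eqS_sym, mem_sing; auto.
  - assert (mem c (sing a)) by (eapply mem_eqS_r; [apply eqS_sym; eauto|]; apply mem_upair; right; apply eqS_refl).
    apply eqS_sym, mem_sing; auto.
Qed.

Lemma upair_upair_inv (a b c : HS A) : eqS a c -> eqS (upair a b) (upair c b) -> True.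
Proof. auto. Qed.

Lemma kpair_inj (a b c d : HS A) : eqS (kpair a b) (kpair c d) -> eqS a c /\ eqS b d.
Proof.
  intro H.
  assert (Hac : eqS a c).
  { assert (M : mem (sing a) (kpair c d)) by
      (eapply mem_eqS_r; [eauto|]; apply mem_upair; left; apply eqS_refl).
    apply mem_upair in M; destruct M as [M|M].
    - apply eqS_sing_inv; auto.
    - apply sing_upair_inv in M; tauto. }
  split; auto.
  assert (M : mem (upair a b) (kpair c d)) by
      (eapply mem_eqS_r; [eauto|]; apply mem_upair; right; apply eqS_refl).
  apply mem_upair in M; destruct M as [M|M].
  -
    apply eqS_sym in M. apply sing_upair_inv in M. destruct M as [_ Hcb].
    assert (M2 : mem (upair c d) (kpair a b)) by
      (eapply mem_eqS_r; [apply eqS_sym; eauto|]; apply mem_upair; right; apply eqS_refl).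
    apply mem_upair in M2; destruct M2 as [M2|M2].
    + apply eqS_sym in M2; apply sing_upair_inv in M2. destruct M2 as [_ Had].
      apply eqS_trans with c; [apply eqS_sym; exact Hcb|].
      apply eqS_trans with a; [apply eqS_sym; exact Hac|exact Had].
    + assert (Hd : mem d (upair a b)) by (eapply mem_eqS_r; [exact M2|]; apply mem_upair; right; apply eqS_refl).
      apply mem_upair in Hd; destruct Hd as [Hd|Hd].
      * apply eqS_trans with c; [apply eqS_sym; exact Hcb|].
        apply eqS_trans with a; [apply eqS_sym; exact Hac|apply eqS_sym; exact Hd].
      * apply eqS_sym; exact Hd.
  - assert (Hb : mem b (upair c d)) by (eapply mem_eqS_r; [exact M|]; apply mem_upair; right; apply eqS_refl).
    apply mem_upair in Hb; destruct Hb as [Hb|Hb]; auto.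
    assert (Hd : mem d (upair a b)) by (eapply mem_eqS_r; [apply eqS_sym; exact M|]; apply mem_upair; right; apply eqS_refl).
    apply mem_upair in Hd; destruct Hd as [Hd|Hd].
    + apply eqS_trans with c; [exact Hb|].
      apply eqS_trans with a; [apply eqS_sym; exact Hac|apply eqS_sym; exact Hd].
    + apply eqS_sym; exact Hd.
Qed.

End HSL.

Definition lift {C : Type} (t : tm C) : tm C :=
  match t with tvar n => tvar (S n) | tcst c => tcst c end.

Definition singF {C : Type} (y a : tm C) : fm C :=
  fAnd (fAll y (fEq (tvar 0) (lift a))) (fMem a y).
Definition upairF {C : Type} (y a b : tm C) : fm C :=
  fAnd (fAll y (fOr (fEq (tvar 0) (lift a)) (fEq (tvar 0) (lift b))))
       (fAnd (fMem a y) (fMem b y)).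
Definition pairF {C : Type} (x a b : tm C) : fm C :=
  fAnd (fAll x (fOr (singF (tvar 0) (lift a)) (upairF (tvar 0) (lift a) (lift b))))
       (fAnd (fEx x (singF (tvar 0) (lift a))) (fEx x (upairF (tvar 0) (lift a) (lift b)))).
Definition app1F {C : Type} (F a r : tm C) : fm C :=
  fEx F (pairF (tvar 0) (lift a) (lift r)).
(* <<k, a>, u> in M *)
Definition app2F {C : Type} (M k a u : tm C) : fm C :=
  fEx M (fEx (tvar 0) (fEx (tvar 0)
    (fAnd (pairF (tvar 0) (lift (lift (lift k))) (lift (lift (lift a))))
          (pairF (tvar 2) (tvar 0) (lift (lift (lift u))))))).

Arguments singF : simpl never.
Arguments upairF : simpl never.
Arguments pairF : simpl never.
Arguments app1F : simpl never.
Arguments app2F : simpl never.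

Section Sat.
Context {A : Type}.
Implicit Types (e : nat -> HS A).

Lemma tev_lift e y (t : tm (HS A)) : tm_eval (scons y e) (lift t) = tm_eval e t.
Proof. destruct t; reflexivity. Qed.

Lemma isSet_mem (x s : HS A) : mem x s -> isSet s.
Proof. destruct s; simpl; auto. Qed.

Lemma singF_sat e y a : sat e (singF y a) <-> eqS (tm_eval e y) (sing (tm_eval e a)).
Proof.
  unfold singF; simpl. repeat setoid_rewrite tev_lift.
  rewrite (eqS_ext _ (sing _) I). split.
  - intros [H1 H2]; split; [eapply isSet_mem; eauto|].
    intro z; rewrite mem_sing; split; auto.
    intro Hz; apply eqS_sym in Hz; eapply mem_eqS_l; eauto.
  - intros [_ H]; split.
    + intros z Hz; apply mem_sing, H; auto.
    + apply H, mem_sing, eqS_refl.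
Qed.

Lemma upairF_sat e y a b : sat e (upairF y a b) <->
   eqS (tm_eval e y) (upair (tm_eval e a) (tm_eval e b)).
Proof.
  unfold upairF; simpl. repeat setoid_rewrite tev_lift.
  rewrite (eqS_ext _ (upair _ _) I). split.
  - intros [H1 [H2 H3]]; split; [eapply isSet_mem; eauto|].
    intro z; rewrite mem_upair; split; auto.
    intros [Hz|Hz]; apply eqS_sym in Hz; eapply mem_eqS_l; eauto.
  - intros [_ H]; split; [|split].
    + intros z Hz; apply mem_upair, H; auto.
    + apply H, mem_upair; left; apply eqS_refl.
    + apply H, mem_upair; right; apply eqS_refl.
Qed.

Lemma pairF_sat e x a b : sat e (pairF x a b) <->
   eqS (tm_eval e x) (kpair (tm_eval e a) (tm_eval e b)).
Proof.
  unfold pairF; cbn [sat]. setoid_rewrite singF_sat. setoid_rewrite upairF_sat.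
  simpl. repeat setoid_rewrite tev_lift.
  unfold kpair; rewrite (eqS_ext _ (upair _ _) I). split.
  - intros [H1 [[y1 [Hy1 E1]] [y2 [Hy2 E2]]]]; split; [eapply isSet_mem; eauto|].
    intro z; rewrite mem_upair; split; auto.
    intros [Hz|Hz].
    + eapply mem_eqS_l; [|exact Hy1]. eapply eqS_trans; [exact E1|apply eqS_sym; exact Hz].
    + eapply mem_eqS_l; [|exact Hy2]. eapply eqS_trans; [exact E2|apply eqS_sym; exact Hz].
  - intros [_ H]; split; [|split].
    + intros z Hz; apply mem_upair, H; auto.
    + exists (sing (tm_eval e a)); split; [apply H, mem_upair; left|]; apply eqS_refl.
    + exists (upair (tm_eval e a) (tm_eval e b)); split; [apply H, mem_upair; right|]; apply eqS_refl.
Qed.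

Lemma app1F_sat e F a r : sat e (app1F F a r) <->
   mem (kpair (tm_eval e a) (tm_eval e r)) (tm_eval e F).
Proof.
  unfold app1F; cbn [sat tm_eval]. setoid_rewrite pairF_sat. simpl. repeat setoid_rewrite tev_lift.
  split.
  - intros [x [Hx E]]; eapply mem_eqS_l; eauto.
  - destruct (tm_eval e F) as [|I f]; cbn [mem]; [tauto|].
    intros [i Hi]; exists (f i); split; [exists i; apply eqS_refl|]. apply eqS_sym; auto.
Qed.

Lemma app2F_sat e M k a u : sat e (app2F M k a u) <->
   mem (kpair (kpair (tm_eval e k) (tm_eval e a)) (tm_eval e u)) (tm_eval e M).
Proof.
  unfold app2F; cbn [sat tm_eval]. setoid_rewrite pairF_sat. simpl. repeat setoid_rewrite tev_lift.
  split.
  - intros [x [Hx [y [Hy [p [Hp [E1 E2]]]]]]].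
    eapply mem_eqS_l; [|exact Hx]. eapply eqS_trans; [exact E2|].
    apply kpair_resp; [exact E1|apply eqS_refl].
  - destruct (tm_eval e M) as [|I f]; cbn [mem]; [tauto|].
    intros [i Hi]; exists (f i); split; [exists i; apply eqS_refl|].
    exists (upair (kpair (tm_eval e k) (tm_eval e a)) (tm_eval e u)); split.
    + eapply mem_eqS_r; [exact Hi|]. apply mem_upair; right; apply eqS_refl.
    + exists (kpair (tm_eval e k) (tm_eval e a)); split.
      * apply mem_upair; left; apply eqS_refl.
      * split; [apply eqS_refl|]. apply eqS_sym; auto.
Qed.
End Sat.

Definition CondF {C : Type} (r m s ab l : C) (k a b : tm C) : fm C :=
  fAnd (fNot (fEq k a))
   (fAnd (fEx (tcst r) (fEx (tcst r)
            (fAnd (app2F (tcst m) (lift (lift k)) (lift (lift a)) (tvar 1))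
                  (app1F (tcst s) (tvar 1) (tvar 0)))))
         (fAll (tcst r) (fAll (tcst r)
            (fImp (app2F (tcst m) (lift (lift k)) (lift (lift a)) (tvar 1))
            (fImp (app1F (tcst s) (tvar 1) (tvar 0))
               (fEx (tcst r) (fAnd (app1F (tcst ab) (tvar 1) (tvar 0))
                                   (app1F (tcst l) (tvar 0) (lift (lift (lift b))))))))))).

Definition PhiF {C : Type} (pa n cc r m s ab l : C) : fm C :=
  fAll (tcst pa)
   (fEx (tcst n)
     (fAll (tvar 1)
       (fImp (fMem (tvar 0) (tcst cc))
         (fAll (tvar 0)
           (fAll (tvar 0)
             (fAll (tvar 1)
               (fImp (pairF (tvar 3) (tvar 1) (tvar 0))
                     (CondF r m s ab l (tvar 4) (tvar 1) (tvar 0))))))))).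

Arguments CondF : simpl never.

Definition CondM {A : Type} (r m s ab l k a b : HS A) : Prop :=
  ~ eqS k a /\
  (exists u, mem u r /\ exists v, mem v r /\
      (mem (kpair (kpair k a) u) m /\ mem (kpair u v) s)) /\
  (forall u, mem u r -> forall v, mem v r -> mem (kpair (kpair k a) u) m ->
      mem (kpair u v) s -> exists w, mem w r /\ (mem (kpair v w) ab /\ mem (kpair w b) l)).

Definition PhiM {A : Type} (pa n cc r m s ab l : HS A) : Prop :=
  forall F, mem F pa -> exists k, mem k n /\
    forall c, mem c F -> mem c cc -> forall y, mem y c -> forall a, mem a y -> forall b, mem b y ->
      eqS c (kpair a b) -> CondM r m s ab l k a b.

Lemma CondF_sat {A : Type} (e : nat -> HS A) r m s ab l k a b :
  sat e (CondF r m s ab l k a b) <->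
  CondM r m s ab l (tm_eval e k) (tm_eval e a) (tm_eval e b).
Proof.
  unfold CondF, CondM; cbn [sat tm_eval].
  setoid_rewrite app2F_sat. setoid_rewrite app1F_sat. cbn [tm_eval].
  repeat setoid_rewrite tev_lift. reflexivity.
Qed.

Lemma PhiF_sat {A : Type} (e : nat -> HS A) pa n cc r m s ab l :
  sat e (PhiF pa n cc r m s ab l) <-> PhiM pa n cc r m s ab l.
Proof.
  unfold PhiF, PhiM; cbn [sat tm_eval scons].
  setoid_rewrite CondF_sat. setoid_rewrite pairF_sat. cbn [tm_eval scons].
  reflexivity.
Qed.

Lemma PhiF_map {C D : Type} (g : C -> D) pa n cc r m s ab l :
  fm_map g (PhiF pa n cc r m s ab l) =
  PhiF (g pa) (g n) (g cc) (g r) (g m) (g s) (g ab) (g l).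
Proof. reflexivity. Qed.

Lemma PhiF_ok {C : Type} (P : C -> Prop) pa n cc r m s ab l :
  P pa -> P n -> P cc -> P r -> P m -> P s -> P ab -> P l ->
  fm_ok P 0 (PhiF pa n cc r m s ab l).
Proof.
  intros. unfold PhiF, CondF, pairF, singF, upairF, app1F, app2F; simpl.
  repeat split; auto; lia.
Qed.

Lemma pairF_ok {C : Type} (P : C -> Prop) x a b :
  P x -> P a -> P b -> fm_ok P 0 (pairF (tcst x) (tcst a) (tcst b)).
Proof.
  intros. unfold pairF, singF, upairF; simpl. repeat split; auto; lia.
Qed.
Lemma pairF_map {C D : Type} (g : C -> D) x a b :
  fm_map g (pairF (tcst x) (tcst a) (tcst b)) = pairF (tcst (g x)) (tcst (g a)) (tcst (g b)).
Proof. reflexivity. Qed.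

Section V.
Context {A : Type}.

Lemma Vn_S (x : HS A) n : mem x (Vn A n) -> mem x (Vn A (S n)).
Proof. intros [j Hj]. exists (inl j). exact Hj. Qed.

Lemma Vn_le (x : HS A) n m : (n <= m)%nat -> mem x (Vn A n) -> mem x (Vn A m).
Proof. induction 1; auto using Vn_S. Qed.

Lemma Vn_atom (a : A) : mem (atom a) (Vn A 0).
Proof. exists a. reflexivity. Qed.

Lemma Vn_hset {I : Type} (f : I -> HS A) n :
  (forall i, mem (f i) (Vn A n)) -> mem (hset f) (Vn A (S n)).
Proof.
  intros H.
  exists (inr (fun j => exists i, eqS (f i) (lvl A n j))).
  cbn [lvl eqS]. split.
  - intro i. destruct (H i) as [j Hj].
    exists (exist _ j (ex_intro _ i Hj)). exact Hj.
  - intros [j [i Hi]]. exists i. exact Hi.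
Qed.

Lemma lvl_trans n (j : lvlIdx A n) (y : HS A) : mem y (lvl A n j) -> mem y (Vn A n).
Proof.
  induction n as [|n IH]; simpl in *.
  - destruct 1.
  - destruct j as [j|P].
    + intro H; apply Vn_S, IH with j; exact H.
    + intros [[j Pj] Hj]. apply Vn_S. exists j. exact Hj.
Qed.

Lemma Vn_trans (x y : HS A) n : mem x (Vn A n) -> mem y x -> mem y (Vn A n).
Proof.
  intros [j Hj] Hy. apply lvl_trans with j. eapply mem_eqS_r; eauto.
Qed.

Lemma Vn_upair (a b : HS A) n : mem a (Vn A n) -> mem b (Vn A n) -> mem (upair a b) (Vn A (S n)).
Proof. intros; apply Vn_hset; intros [|]; auto. Qed.
Lemma Vn_sing (a : HS A) n : mem a (Vn A n) -> mem (sing a) (Vn A (S n)).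
Proof. intros; apply Vn_hset; intros []; auto. Qed.
Lemma Vn_kpair (a b : HS A) n : mem a (Vn A n) -> mem b (Vn A n) -> mem (kpair a b) (Vn A (S (S n))).
Proof. intros; apply Vn_upair; [apply Vn_sing|apply Vn_upair]; auto. Qed.

Lemma inV_of (x : HS A) n : mem x (Vn A n) -> inV x.
Proof. intros; exists n; auto. Qed.

Lemma Vn_Pfin (s : HS A) n : mem s (Vn A n) -> mem (Pfin s) (Vn A (S (S n))).
Proof.
  intros H. destruct s as [a|I f]; simpl Pfin.
  - apply Vn_sing. apply Vn_le with 1%nat; [lia|]. apply Vn_hset; intros [].
  - apply Vn_hset. intro l. apply Vn_hset. intros [i Hi]. simpl.
    apply Vn_trans with (hset f); auto. exists i; apply eqS_refl.
Qed.
End V.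

Lemma pigeon : forall n (f : nat -> nat), (forall j, (j <= n)%nat -> (f j < n)%nat) ->
  exists i j, (i < j <= n)%nat /\ f i = f j.
Proof.
  induction n as [|n IH]; intros f Hf.
  - specialize (Hf 0%nat (le_n 0)); lia.
  - destruct (classic (exists i, (i <= n)%nat /\ f i = f (S n))) as [[i [Hi E]]|Hno].
    + exists i, (S n); split; [lia|auto].
    + set (g := fun j => if Nat.eqb (f j) n then f (S n) else f j).
      assert (Hg : forall j, (j <= n)%nat -> (g j < n)%nat).
      { intros j Hj. unfold g. destruct (Nat.eqb_spec (f j) n) as [E|E].
        - assert (f (S n) <> n) by (intro E2; apply Hno; exists j; split; auto; lia).
          specialize (Hf (S n) (le_n _)); lia.
        - specialize (Hf j ltac:(lia)); lia. }
      destruct (IH g Hg) as [i [j [Hij E]]].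
      unfold g in E.
      destruct (Nat.eqb_spec (f i) n) as [Ei|Ei]; destruct (Nat.eqb_spec (f j) n) as [Ej|Ej].
      * exists i, j; split; [lia|congruence].
      * exfalso; apply Hno; exists j; split; [lia|congruence].
      * exfalso; apply Hno; exists i; split; [lia|congruence].
      * exists i, j; split; [lia|auto].
Qed.

Definition near_int (y d : R) := exists m : Z, Rabs (y - IZR m) < d.

Lemma near_int_sub y1 y2 d1 d2 : near_int y1 d1 -> near_int y2 d2 -> near_int (y1 - y2) (d1 + d2).
Proof.
  intros [m1 H1] [m2 H2]. exists (m1 - m2)%Z. rewrite minus_IZR.
  replace (y1 - y2 - (IZR m1 - IZR m2)) with ((y1 - IZR m1) - (y2 - IZR m2)) by ring.
  eapply Rle_lt_trans; [apply Rabs_triang|]. rewrite Rabs_Ropp. lra.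
Qed.

Lemma Int_part_bounds r : IZR (Int_part r) <= r < IZR (Int_part r) + 1.
Proof. destruct (base_Int_part r); lra. Qed.

Lemma dirichlet : forall (L : list R) (d : R), 0 < d -> forall M : nat,
  exists k : nat, (M < k)%nat /\ forall x, In x L -> near_int (INR k * x) d.
Proof.
  induction L as [|x L IH]; intros d Hd M.
  - exists (S M); split; [lia|]. intros x [].
  - assert (Hd2 : 0 < d / 2) by lra.
    assert (HG : forall M', exists k, (M' < k)%nat /\ forall z, In z L -> near_int (INR k * z) (d/2))
      by (intro M'; apply IH; auto).
    set (g := fun M' => proj1_sig (constructive_indefinite_description _ (HG M'))).
    assert (Hg : forall M', (M' < g M')%nat /\ forall z, In z L -> near_int (INR (g M') * z) (d/2))
      by (intro M'; unfold g; destruct (constructive_indefinite_description _ (HG M')); auto).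
    set (s := fix s (j : nat) : nat := match j with O => g M | S j' => g (s j' + M)%nat end).
    assert (Hs1 : forall i dd, (s i + M < s (i + S dd))%nat).
    { intros i dd; induction dd as [|dd IHd].
      - rewrite Nat.add_1_r. simpl. apply Hg.
      - replace (i + S (S dd))%nat with (S (i + S dd)) by lia. simpl.
        pose proof (proj1 (Hg (s (i + S dd) + M)%nat)). lia. }
    assert (Hs : forall i j, (i < j)%nat -> (s i + M < s j)%nat).
    { intros i j Hij. replace j with (i + S (j - i - 1))%nat by lia. apply Hs1. }
    assert (Hsg : forall j z, In z L -> near_int (INR (s j) * z) (d/2)).
    { intros [|j] z Hz; simpl; apply (proj2 (Hg _)); auto. }
    destruct (archimed_cor1 (d/2) Hd2) as [N [HN HN0]].
    set (y := fun j => frac_part (INR (s j) * x)).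
    set (f := fun j => Z.to_nat (Int_part (INR N * y j))).
    assert (HN0' : 0 < INR N) by (apply lt_0_INR; auto).
    assert (Hf : forall j, (j <= N)%nat -> (f j < N)%nat).
    { intros j _. unfold f. pose proof (base_fp (INR (s j) * x)) as [Hy0 Hy1].
      fold (y j) in Hy0, Hy1.
      pose proof (Int_part_bounds (INR N * y j)) as [B1 B2].
      assert (0 <= INR N * y j) by (apply Rmult_le_pos; lra).
      assert (INR N * y j < INR N) by (rewrite <- (Rmult_1_r (INR N)) at 2; apply Rmult_lt_compat_l; lra).
      assert (G1 : (-1 < Int_part (INR N * y j))%Z) by (apply lt_IZR; simpl; lra).
      assert (G2 : (Int_part (INR N * y j) < Z.of_nat N)%Z) by (apply lt_IZR; rewrite <- INR_IZR_INZ; lra).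
      lia. }
    destruct (pigeon N f Hf) as [i [j [Hij E]]].
    exists (s j - s i)%nat. split.
    + pose proof (Hs i j ltac:(lia)). lia.
    + assert (Hle : (s i <= s j)%nat) by (pose proof (Hs i j ltac:(lia)); lia).
      rewrite minus_INR by exact Hle.
      intros z [Ez|Hz]; [subst z|].
      *
        unfold f in E.
        pose proof (Int_part_bounds (INR N * y i)) as [B1 B2].
        pose proof (Int_part_bounds (INR N * y j)) as [B3 B4].
        pose proof (base_fp (INR (s i) * x)) as [Hyi _].
        pose proof (base_fp (INR (s j) * x)) as [Hyj _].
        assert (G1 : (-1 < Int_part (INR N * y i))%Z).
        { apply lt_IZR; simpl. assert (0 <= INR N * y i) by (apply Rmult_le_pos; unfold y; lra). lra. }
        assert (G2 : (-1 < Int_part (INR N * y j))%Z).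
        { apply lt_IZR; simpl. assert (0 <= INR N * y j) by (apply Rmult_le_pos; unfold y; lra). lra. }
        assert (Eq : Int_part (INR N * y i) = Int_part (INR N * y j)) by lia.
        rewrite Eq in B1, B2.
        assert (Hyy : Rabs (y j - y i) < / INR N).
        { apply Rabs_def1.
          - apply Rmult_lt_reg_l with (INR N); auto. rewrite Rinv_r by lra. lra.
          - apply Rmult_lt_reg_l with (INR N); auto.
            replace (INR N * - / INR N) with (-1) by (field; lra). lra. }
        exists (Int_part (INR (s j) * x) - Int_part (INR (s i) * x))%Z.
        rewrite minus_IZR. unfold y, frac_part in Hyy.
        replace ((INR (s j) - INR (s i)) * x - (IZR (Int_part (INR (s j) * x)) - IZR (Int_part (INR (s i) * x))))
          with (INR (s j) * x - IZR (Int_part (INR (s j) * x)) - (INR (s i) * x - IZR (Int_part (INR (s i) * x)))) by ring.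
        lra.
      * replace ((INR (s j) - INR (s i)) * z) with (INR (s j) * z - INR (s i) * z) by ring.
        replace d with (d/2 + d/2) by field.
        apply near_int_sub; apply Hsg; auto.
Qed.

Lemma abs_sin_pos x : 0 < x -> Rabs (sin x) <= x.
Proof.
  intros Hx. pose proof (sin_lt_x x Hx). pose proof (SIN_bound x).
  apply Rabs_le. split; [|lra].
  destruct (Rle_dec x PI).
  - pose proof (sin_ge_0 x ltac:(lra) r). lra.
  - pose proof PI2_3_2. lra.
Qed.

Lemma abs_sin_le x : Rabs (sin x) <= Rabs x.
Proof.
  destruct (Rtotal_order x 0) as [H|[H|H]].
  - rewrite <- (Ropp_involutive x), sin_neg, Rabs_Ropp, Rabs_Ropp.
    rewrite (Rabs_right (-x)) by lra. apply abs_sin_pos; lra.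
  - subst; rewrite sin_0; lra.
  - rewrite (Rabs_right x) by lra. apply abs_sin_pos; lra.
Qed.

Lemma sin_Zperiod y m : sin (y - 2 * IZR m * PI) = sin y.
Proof.
  destruct m as [|p|p].
  - simpl. f_equal. ring.
  - assert (E : IZR (Z.pos p) = INR (Pos.to_nat p)) by (rewrite INR_IZR_INZ, positive_nat_Z; reflexivity).
    rewrite E. rewrite <- (sin_period (y - 2 * INR (Pos.to_nat p) * PI) (Pos.to_nat p)).
    f_equal. ring.
  - assert (E : IZR (Z.neg p) = - INR (Pos.to_nat p)) by (rewrite INR_IZR_INZ, positive_nat_Z; reflexivity).
    rewrite E. replace (y - 2 * - INR (Pos.to_nat p) * PI) with (y + 2 * INR (Pos.to_nat p) * PI) by ring.
    apply sin_period.
Qed.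

Lemma sin_near k t d : near_int (INR k * (t / (2 * PI))) (d / (2 * PI)) -> Rabs (sin (INR k * t)) < d.
Proof.
  intros [m Hm]. pose proof PI2_3_2 as HP.
  rewrite <- (sin_Zperiod _ m).
  eapply Rle_lt_trans; [apply abs_sin_le|].
  replace (INR k * t - 2 * IZR m * PI) with ((2 * PI) * (INR k * (t / (2 * PI)) - IZR m)) by (field; lra).
  rewrite Rabs_mult, (Rabs_right (2 * PI)) by lra.
  apply Rmult_lt_compat_l with (r := 2 * PI) in Hm; [|lra].
  replace (2 * PI * (d / (2 * PI))) with d in Hm by (field; lra). exact Hm.
Qed.

Section Std.
Context {X : Type} (rX : R -> X) (Hinj : forall r s : R, rX r = rX s -> r = s).

Definition RS : HS X := hset (fun r : R => rS rX r).
Definition condS (t e : R) : HS X := kpair (rS rX t) (rS rX e).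
Definition Cset : HS X :=
  hset (fun p : {p : (R * R)%type | 0 < snd p} => condS (fst (proj1_sig p)) (snd (proj1_sig p))).

Lemma rS_inj a b : eqS (rS rX a) (rS rX b) -> a = b.
Proof. simpl; apply Hinj. Qed.

Lemma std_Cond kk t e (a b : HS X) :
  eqS a (rS rX t) -> eqS b (rS rX e) -> Rabs t < INR kk ->
  Rabs (sin (INR kk * t)) < e ->
  CondM RS (mulS rX) (sinS rX) (absS rX) (ltS rX) (rS rX (INR kk)) a b.
Proof.
  intros Ha Hb Ht Hs. split; [|split].
  - intro E. assert (E2 : INR kk = t) by (apply rS_inj; eapply eqS_trans; eauto).
    pose proof (Rle_abs t). lra.
  - exists (rS rX (INR kk * t)); split; [exists (INR kk * t); apply eqS_refl|].
    exists (rS rX (sin (INR kk * t))); split; [exists (sin (INR kk * t)); apply eqS_refl|].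
    split.
    + exists (INR kk, t). apply kpair_resp; [apply kpair_resp; [apply eqS_refl|exact Ha]|apply eqS_refl].
    + exists (INR kk * t). apply eqS_refl.
  - intros u _ v _ Hm Hsn.
    destruct Hm as [[p1 p2] Hp]. simpl fst in Hp; simpl snd in Hp.
    apply kpair_inj in Hp; destruct Hp as [Hp Hu].
    apply kpair_inj in Hp; destruct Hp as [Hk Ha2].
    apply rS_inj in Hk. assert (Et : t = p2) by (apply rS_inj; eapply eqS_trans; [apply eqS_sym; exact Ha|exact Ha2]).
    subst p1 p2.
    destruct Hsn as [q Hq]. apply kpair_inj in Hq; destruct Hq as [Hu2 Hv].
    assert (Eq : INR kk * t = q) by (apply rS_inj; eapply eqS_trans; [apply eqS_sym; exact Hu|exact Hu2]).
    subst q.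
    exists (rS rX (Rabs (sin (INR kk * t)))); split; [exists (Rabs (sin (INR kk * t))); apply eqS_refl|].
    split.
    + exists (sin (INR kk * t)). apply kpair_resp; [exact Hv|apply eqS_refl].
    + exists (exist (fun p : (R * R)%type => fst p < snd p) (Rabs (sin (INR kk * t)), e) Hs).
      apply kpair_resp; [apply eqS_refl|exact Hb].
Qed.

Lemma Pfin_members (A' F : HS X) : mem F (Pfin A') ->
  exists l0 : list (HS X), forall c, mem c F -> exists z, In z l0 /\ eqS c z.
Proof.
  destruct A' as [a|I f]; simpl Pfin.
  - intro H. apply mem_sing in H. exists nil. intros c Hc.
    apply (mem_eqS_r _ _ _ H) in Hc. destruct Hc as [[] _].
  - intros [l Hl]. exists (map f l). intros c Hc.
    apply (mem_eqS_r _ _ _ Hl) in Hc. destruct Hc as [[i Hi] Hc]. simpl in Hc.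
    exists (f i); split; [apply in_map; auto|exact Hc].
Qed.

Lemma extract (l0 : list (HS X)) : exists P : list (R * R),
  (forall p, In p P -> 0 < snd p) /\
  forall z, In z l0 -> mem z Cset -> exists p, In p P /\ eqS z (condS (fst p) (snd p)).
Proof.
  induction l0 as [|z l IH].
  - exists nil; split; [intros p []|intros z []].
  - destruct IH as [P [HP1 HP2]].
    destruct (classic (mem z Cset)) as [Hz|Hz].
    + destruct Hz as [[p Hp] Hzp]. exists (p :: P). split.
      * intros q [<-|Hq]; auto.
      * intros z' [<-|Hz'] Hc.
        -- exists p; split; [left; auto|exact Hzp].
        -- destruct (HP2 z' Hz' Hc) as [q [Hq Eq]]. exists q; split; [right; auto|auto].
    + exists P; split; auto.
      intros z' [<-|Hz'] Hc; [contradiction|]. auto.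
Qed.

Lemma bounds (P : list (R * R)) : (forall p, In p P -> 0 < snd p) ->
  exists d M, 0 < d /\ forall p, In p P -> d <= snd p /\ Rabs (fst p) < INR M.
Proof.
  induction P as [|[t e] P IH]; intros H.
  - exists 1, 0%nat; split; [lra|intros p []].
  - destruct IH as [d [M [Hd HM]]]; [intros; apply H; right; auto|].
    assert (He : 0 < e) by (apply (H (t, e)); left; auto).
    destruct (INR_unbounded (Rabs t)) as [M0 HM0].
    exists (Rmin d e), (M + M0)%nat. split; [apply Rmin_pos; auto|].
    intros p [<-|Hp]; simpl.
    + split; [apply Rmin_r|]. rewrite plus_INR. pose proof (pos_INR M). lra.
    + destruct (HM p Hp) as [H1 H2]. split.
      * eapply Rle_trans; [apply Rmin_l|auto].
      * rewrite plus_INR. pose proof (pos_INR M0). lra.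
Qed.

Lemma std_Phi (A' : HS X) :
  PhiM (Pfin A') (NatS rX) Cset RS (mulS rX) (sinS rX) (absS rX) (ltS rX).
Proof.
  intros F HF.
  destruct (Pfin_members A' F HF) as [l0 Hl0].
  destruct (extract l0) as [P [HP1 HP2]].
  destruct (bounds P HP1) as [d [M [Hd HM]]].
  assert (Hd' : 0 < d / (2 * PI)) by (pose proof PI_RGT_0; apply Rdiv_lt_0_compat; lra).
  destruct (dirichlet (map (fun p => fst p / (2 * PI)) P) _ Hd' M) as [kk [Hkk Hnear]].
  exists (rS rX (INR kk)). split; [exists kk; apply eqS_refl|].
  intros c Hc HcC y Hy a Ha b Hb Hcab.
  destruct (Hl0 c Hc) as [z [Hz Ecz]].
  assert (HzC : mem z Cset) by (eapply mem_eqS_l; eauto).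
  destruct (HP2 z Hz HzC) as [[t e] [Hp Ez]]. simpl in Ez.
  assert (E : eqS (kpair a b) (kpair (rS rX t) (rS rX e))).
  { eapply eqS_trans; [apply eqS_sym; exact Hcab|]. eapply eqS_trans; eauto. }
  apply kpair_inj in E; destruct E as [Ea Eb].
  destruct (HM _ Hp) as [Hde Ht]; simpl in Hde, Ht.
  apply std_Cond with t e; auto.
  - apply lt_INR in Hkk. lra.
  - apply Rlt_le_trans with d; auto. apply sin_near.
    apply (Hnear (t / (2 * PI))). apply (in_map (fun p => fst p / (2 * PI)) P (t, e)). auto.
Qed.
End Std.

Section VX.
Context {X : Type} (rX : R -> X).
Lemma V_rS r : mem (rS rX r) (Vn X 0).
Proof. apply Vn_atom. Qed.
Lemma inV_rS r : inV (rS rX r).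
Proof. exists 0%nat; apply V_rS. Qed.
Lemma inV_RS : inV (RS rX).
Proof. exists 1%nat; apply Vn_hset; intro; apply V_rS. Qed.
Lemma inV_NatS : inV (NatS rX).
Proof. exists 1%nat; apply Vn_hset; intro; apply V_rS. Qed.
Lemma V_condS t e : mem (condS rX t e) (Vn X 2).
Proof. apply Vn_kpair; apply V_rS. Qed.
Lemma inV_condS t e : inV (condS rX t e).
Proof. exists 2%nat; apply V_condS. Qed.
Lemma inV_Cset : inV (Cset rX).
Proof. exists 3%nat; apply Vn_hset; intro; apply V_condS. Qed.
Lemma inV_graph1 f : inV (graph1 rX f).
Proof. exists 3%nat; apply Vn_hset; intro; apply Vn_kpair; apply V_rS. Qed.
Lemma inV_graph2 g : inV (graph2 rX g).
Proof.
  exists 5%nat; apply Vn_hset; intro; apply Vn_kpair.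
  - apply Vn_kpair; apply V_rS.
  - apply Vn_le with 0%nat; [lia|apply V_rS].
Qed.
Lemma inV_ltS : inV (ltS rX).
Proof. exists 3%nat; apply Vn_hset; intro; apply Vn_kpair; apply V_rS. Qed.
Lemma inV_Pfin (A : HS X) : inV A -> inV (Pfin A).
Proof. intros [n Hn]. exists (S (S n)). apply Vn_Pfin; auto. Qed.
End VX.

Theorem mainTheorem11 (X Y : Type) (rX : R -> X) (iX : X -> Y) (star : HS X -> HS Y) :
  (forall r s : R, rX r = rX s -> r = s) ->
  enlargement iX star ->
  exists k : HS Y,
    mem k (star (NatS rX)) /\
    ~ (exists n : nat, eqS k (star (rS rX (INR n)))) /\
    forall t : R, exists u v : HS Y,
      appS (star (mulS rX)) (kpair k (star (rS rX t))) u /\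
      appS (star (sinS rX)) u v /\
      infinitesimal rX star v.
Proof.
  intros Hinj [[_ [_ [_ [_ [_ Htr]]]]] Henl].
  destruct (Henl (Cset rX) (inV_Cset rX)) as [B [[A' [HA' HB]] Hsub]].
  { intros [a Ha]. exact Ha. }
  assert (HY : PhiM (star (Pfin A')) (star (NatS rX)) (star (Cset rX)) (star (RS rX))
                    (star (mulS rX)) (star (sinS rX)) (star (absS rX)) (star (ltS rX))).
  { rewrite <- (PhiF_sat (fun _ => emptyS)). rewrite <- PhiF_map.
    apply Htr.
    - apply PhiF_ok; [apply inV_Pfin; auto|apply inV_NatS|apply inV_Cset|apply inV_RS|apply inV_graph2|apply inV_graph1|apply inV_graph1|apply inV_ltS].
    - apply PhiF_sat. apply std_Phi; auto. }
  destruct (HY B HB) as [k [Hk Hc]].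
  assert (Key : forall t e, 0 < e ->
     CondM (star (RS rX)) (star (mulS rX)) (star (sinS rX)) (star (absS rX)) (star (ltS rX))
           k (star (rS rX t)) (star (rS rX e))).
  { intros t e He.
    assert (HcB : mem (star (condS rX t e)) B).
    { apply Hsub. exists (exist (fun p : (R * R)%type => 0 < snd p) (t, e) He). apply eqS_refl. }
    assert (HcC : mem (star (condS rX t e)) (star (Cset rX))).
    { pose proof (Htr (fMem (tcst (condS rX t e)) (tcst (Cset rX)))) as T.
      cbn [fm_map tm_map sat tm_eval fm_ok tm_ok] in T. apply T.
      - split; [apply inV_condS|apply inV_Cset].
      - exists (exist (fun p : (R * R)%type => 0 < snd p) (t, e) He). apply eqS_refl. }
    assert (Hpair : eqS (star (condS rX t e)) (kpair (star (rS rX t)) (star (rS rX e)))).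
    { pose proof (Htr (pairF (tcst (condS rX t e)) (tcst (rS rX t)) (tcst (rS rX e)))) as T.
      rewrite pairF_map in T. rewrite pairF_sat in T. rewrite pairF_sat in T.
      simpl tm_eval in T. apply T.
      - apply pairF_ok; auto using inV_condS, inV_rS.
      - apply eqS_refl. }
    apply (Hc _ HcB HcC (upair (star (rS rX t)) (star (rS rX e)))).
    - eapply mem_eqS_r; [apply eqS_sym; exact Hpair|]. apply mem_upair; right; apply eqS_refl.
    - apply mem_upair; left; apply eqS_refl.
    - apply mem_upair; right; apply eqS_refl.
    - exact Hpair. }
  exists k. split; [exact Hk|]. split.
  - intros [n Hn]. destruct (Key (INR n) 1 ltac:(lra)) as [H _]. exact (H Hn).
  - intro t. destruct (Key t 1 ltac:(lra)) as [_ [[u [Hu [v [Hv [Hm Hs]]]]] _]].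
    exists u, v. split; [exact Hm|]. split; [exact Hs|].
    intros n Hn.
    assert (Hpos : 0 < / INR n) by (apply Rinv_0_lt_compat, lt_0_INR; auto).
    destruct (Key t (/ INR n) Hpos) as [_ [_ H]].
    destruct (H u Hu v Hv Hm Hs) as [w [_ [Hw1 Hw2]]].
    exists w; split; assumption.
Qed.
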